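(* Let $R$ be an exchange ring in which $2$ is invertible, and let $a\in R$ be such that $a-a^3$ is regular. Then there is an isomorphism of right $R$-modules $(a-a^3)R\oplus r(a)\cong (a-a^3)R\oplus R/aR$.
   Context: All rings are associative with identity; modules are right modules. An element $x\in R$ is regular if $x=xyx$ for some $y\in R$. $R$ is an exchange ring if for every $x\in R$ there is an idempotent $e\in xR$ with $1-e\in(1-x)R$. $r(a)=\{x\in R: ax=0\}$. *)

(* Defs.v *)
From HB Require Import structures.
From mathcomp Require Import all_boot all_algebra.
Set Implicit Arguments. Unset Strict Implicit. Unset Printing Implicit Defensive.
Import GRing.Theory.
Local Open Scope ring_scope.

Definition regular (R : pzRingType) (x : R) : Prop := exists y : R, x = x * y * x.

Definition rideal (R : pzRingType) (x : R) (z : R) : Prop := exists y : R, z = x * y.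

Definition exchange_ring (R : pzRingType) : Prop :=
  forall x : R, exists e : R, e * e = e /\ rideal x e /\ rideal (1 - x) (1 - e).

Definition rann (R : pzRingType) (a : R) (x : R) : Prop := a * x = 0.

(* Right R-module isomorphism  bR (+) r(a)  ~=  bR (+) R/aR.
   Elements of bR (+) R/aR are represented by pairs (w1,w2) with w1 in bR and
   w2 in R, two representatives being identified iff they agree in the first
   component and differ by an element of aR in the second.  A module map into
   the quotient is thus given by a function f into representatives whose
   induced map on classes is additive and right R-linear; it is an isomorphism
   iff the induced map on classes is bijective. *)
Definition iso_sum_rann_quot (R : pzRingType) (b a : R) : Prop :=
  let dom (u : R * R) := rideal b u.1 /\ rann a u.2 in
  let cod (w : R * R) := rideal b w.1 in
  let eqv (w w' : R * R) := w.1 = w'.1 /\ rideal a (w.2 - w'.2) in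
  exists f : R * R -> R * R,
    (forall u, dom u -> cod (f u)) /\
    (forall u v, dom u -> dom v ->
       eqv (f (u.1 + v.1, u.2 + v.2)) ((f u).1 + (f v).1, (f u).2 + (f v).2)) /\
    (forall u (r : R), dom u ->
       eqv (f (u.1 * r, u.2 * r)) ((f u).1 * r, (f u).2 * r)) /\
    (forall u v, dom u -> dom v -> eqv (f u) (f v) -> u = v) /\
    (forall w, cod w -> exists u, dom u /\ eqv (f u) w).

(* Main.v *)
Require Import Defs.
From HB Require Import structures.
From mathcomp Require Import all_boot all_algebra.
Import GRing.Theory.
Local Open Scope ring_scope.

Lemma helper_zmod (R : zmodType) (X Q E A : R) :
  X + (Q - E) - (A + Q) = X - A - E.
Proof. by rewrite opprD !addrA addrAC (addrAC (X + Q)) addrK addrAC. Qed.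

Theorem lemma2p2 (R : pzRingType) (a : R) :
  exchange_ring R ->
  (exists t : R, 2%:R * t = 1 /\ t * 2%:R = 1) ->
  regular (a - a ^+ 3) ->
  iso_sum_rann_quot (a - a ^+ 3) a.
Proof.
move=> _ _ [c hc].
set b := a - a ^+ 3 in hc *.
set q : R := 1 - a ^+ 2.
have hqa : q * a = b by rewrite /q /b mulrBl mul1r -exprSr.
have haq : a * q = b by rewrite /q /b mulrBr mulr1 -exprS.
have hab : a * b = b * a by rewrite -{1}hqa -{1}haq !mulrA.
have dec : forall x, x = a * (a * x) + q * x.
  by move=> x; rewrite /q mulrBl mul1r mulrA -expr2 addrC subrK.
have hq0 : forall x, a * x = 0 -> q * x = x.
  by move=> x hx; rewrite {2}(dec x) hx mulr0 add0r.
clearbody b q.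
set e := b * c.
have heb : forall z, e * (b * z) = b * z by move=> z; rewrite /e mulrA -hc.
have hee : forall z, e * (e * z) = e * z.
  by move=> z; rewrite /e -(mulrA b c z) heb mulrA.
pose W (u : R * R) := q * (c * u.1) + u.2.
exists (fun u => (e * W u, W u)).
split; [|split; [|split; [|split]]].
- by move=> u _ /=; exists (c * W u); rewrite /e mulrA.
- move=> [u1 u2] [v1 v2] _ _ /=.
  have -> : W (u1 + v1, u2 + v2) = W (u1, u2) + W (v1, v2).
    by rewrite /W /= !mulrDr addrACA.
  split; [by rewrite mulrDr | by exists 0; rewrite subrr mulr0].
- move=> [u1 u2] r _ /=.
  have -> : W (u1 * r, u2 * r) = W (u1, u2) * r.
    by rewrite /W /= [RHS]mulrDl -!mulrA.
  by split; [rewrite mulrA | exists 0; rewrite subrr mulr0].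
- move=> [u1 u2] [v1 v2] [/= [r1 hr1] hu2] [/= [r2 hr2] hv2] [/= he [y hy]].
  rewrite /rann /= in hu2 hv2.
  set x1 := u1 - v1. set x2 := u2 - v2.
  have hx1 : x1 = b * (r1 - r2) by rewrite /x1 hr1 hr2 mulrBr.
  have hx2 : a * x2 = 0 by rewrite /x2 mulrBr hu2 hv2 subrr.
  set d := W (u1, u2) - W (v1, v2).
  have hd : d = q * (c * x1) + x2.
    by rewrite /d /W /x1 /x2 /= !mulrBr opprD addrACA.
  have hed : e * d = 0 by rewrite /d mulrBr he subrr.
  have hdq : d = q * (c * x1 + x2).
    by rewrite hd [RHS]mulrDr (hq0 _ hx2).
  have hy' : d = a * y by exact: hy.
  have hdb : d = b * (a * (c * x1 + x2) + y).
    rewrite {1}(dec d) {1}hdq hy' (mulrA a q) haq (mulrA q a) hqa mulrA hab -mulrA.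
    by rewrite -mulrDr.
  have d0 : d = 0 by rewrite -hed {2}hdb heb -hdb.
  have ad : a * d = x1.
    by rewrite hd mulrDr hx2 addr0 mulrA haq mulrA -/e hx1 heb.
  have x10 : x1 = 0 by rewrite -ad d0 mulr0.
  have x20 : x2 = 0 by move: hd; rewrite d0 x10 !mulr0 add0r => ->.
  move/eqP: x10; rewrite subr_eq0 => /eqP ->.
  by move/eqP: x20; rewrite subr_eq0 => /eqP ->.
- move=> [w1 w2] [/= r hr].
  set V := w1 + (1 - e) * (q * w2).
  exists (a * V, V - q * (c * (a * V))).
  have haV : a * V = b * (a * r + w2 - a * (c * (q * w2))).
    by rewrite /V hr mulrDr mulrBl mul1r mulrBr (mulrA a q) haq /e -(mulrA b c) !(mulrA a b) hab -!mulrA [RHS]mulrBr mulrDr addrA.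
  have hW : W (a * V, V - q * (c * (a * V))) = V by rewrite /W /= addrC subrK.
  split; first split.
  - by rewrite /rideal /=; exists (a * r + w2 - a * (c * (q * w2))).
  - by rewrite /rann /= mulrBr (mulrA a q) haq haV (mulrA b c) -/e heb subrr.
  rewrite hW; split.
    by rewrite /V mulrDr hr heb mulrBl mul1r mulrBr hee subrr addr0.
  exists (q * r - a * w2 - q * (c * (q * w2))).
  rewrite !mulrBr !(mulrA a q) haq (mulrA b c) -/e.
  rewrite /V hr mulrBl mul1r [X in _ - X = _](dec w2).
  exact: helper_zmod.
Qed.
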